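(* Let $\mathbb{K}=(G,M,I)$ be a finite formal context with concept lattice $\underline{\mathfrak{B}}(\mathbb{K})$ and let $\underline{S}$ be an interval of $\underline{\mathfrak{B}}(\mathbb{K})$ with $|\underline{S}|=1$, say $\underline{S}=\{s\}=[s,s]$. Then $\underline{S}$ is dismantling for $\underline{\mathfrak{B}}(\mathbb{K})$ if and only if $s$ is doubly irreducible in $\underline{\mathfrak{B}}(\mathbb{K})$.
   Context: For $u\le v$ in a lattice $L$, $[u,v]=\{x\mid u\le x\le v\}$, $(v]=\{x\mid x\le v\}$, $[u)=\{x\mid u\le x\}$. An interval $[u,v]$ of $L$ is quasi-dismantling for $L$ if $u$ is supremum-prime in $(v]$ (for all $x,y\in(v]$, $u\le x\vee y$ implies $u\le x$ or $u\le y$) and $v$ is infimum-prime in $[u)$ (for all $x,y\in[u)$, $x\wedge y\le v$ implies $x\le v$ or $y\le v$); it is dismantling for $L$ if moreover $u\neq\bot$ and $v\neq\top$. An element $c$ of a finite lattice is supremum-irreducible if it has exactly one lower neighbor, infimum-irreducible if it has exactly one upper neighbor, and doubly irreducible if both hold. The concept lattice $\underline{\mathfrak{B}}(\mathbb{K})$ is the set of formal concepts $(A,B)$ ($A\subseteq G$, $B\subseteq M$, $A'=B$, $B'=A$ with the usual derivation operators) ordered by inclusion of extents. *)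

(* Defs.v *)
From mathcomp Require Import all_boot.
Set Implicit Arguments. Unset Strict Implicit. Unset Printing Implicit Defensive.

Section FCA.
Variables (G M : finType) (I : G -> M -> bool).

Definition ext_der (A : {set G}) : {set M} := [set m | [forall g in A, I g m]].
Definition int_der (B : {set M}) : {set G} := [set g | [forall m in B, I g m]].

Definition is_concept (p : {set G} * {set M}) : bool :=
  (ext_der p.1 == p.2) && (int_der p.2 == p.1).

Definition concept := {p : {set G} * {set M} | is_concept p}.

Definition extent (c : concept) : {set G} := (val c).1.
Definition intent (c : concept) : {set M} := (val c).2.

Definition cle (x y : concept) : bool := extent x \subset extent y.
Definition clt (x y : concept) : bool := (x != y) && cle x y.

Lemma galois (A : {set G}) (B : {set M}) :
  (A \subset int_der B) = (B \subset ext_der A).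
Proof.
apply/subsetP/subsetP => H x Hx; rewrite inE; apply/forallP => y; apply/implyP => Hy.
- by have := H y Hy; rewrite inE => /forallP/(_ x)/implyP; apply.
- by have := H y Hy; rewrite inE => /forallP/(_ x)/implyP; apply.
Qed.

Lemma ext_int_ext (A : {set G}) : ext_der (int_der (ext_der A)) = ext_der A.
Proof.
apply/eqP; rewrite eqEsubset; apply/andP; split; last by rewrite -galois.
have HA : A \subset int_der (ext_der A) by rewrite galois.
apply/subsetP => m; rewrite !inE => /forallP H; apply/forallP => g; apply/implyP => Hg.
by have := H g; rewrite (subsetP HA g Hg).
Qed.

Lemma int_ext_int (B : {set M}) : int_der (ext_der (int_der B)) = int_der B.
Proof.
apply/eqP; rewrite eqEsubset; apply/andP; split; last by rewrite galois.
have HB : B \subset ext_der (int_der B) by rewrite -galois.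
apply/subsetP => g; rewrite !inE => /forallP H; apply/forallP => m; apply/implyP => Hm.
by have := H m; rewrite (subsetP HB m Hm).
Qed.

Lemma concept_of_intentP (B : {set M}) : is_concept (int_der B, ext_der (int_der B)).
Proof. by rewrite /is_concept /= int_ext_int !eqxx. Qed.

Lemma concept_of_extentP (A : {set G}) : is_concept (int_der (ext_der A), ext_der A).
Proof. by rewrite /is_concept /= ext_int_ext !eqxx. Qed.

Definition concept_of_intent (B : {set M}) : concept :=
  exist (fun p => is_concept p) _ (concept_of_intentP B).
Definition concept_of_extent (A : {set G}) : concept :=
  exist (fun p => is_concept p) _ (concept_of_extentP A).

Definition cjoin (x y : concept) : concept := concept_of_intent (intent x :&: intent y).
Definition cmeet (x y : concept) : concept := concept_of_extent (extent x :&: extent y).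
Definition cbot : concept := concept_of_intent setT.
Definition ctop : concept := concept_of_extent setT.

Definition sup_prime_below (u v : concept) : Prop :=
  forall x y : concept, cle x v -> cle y v ->
    cle u (cjoin x y) -> cle u x \/ cle u y.

Definition inf_prime_above (u v : concept) : Prop :=
  forall x y : concept, cle u x -> cle u y ->
    cle (cmeet x y) v -> cle x v \/ cle y v.

Definition quasi_dismantling (u v : concept) : Prop :=
  cle u v /\ sup_prime_below u v /\ inf_prime_above u v.

Definition dismantling (u v : concept) : Prop :=
  quasi_dismantling u v /\ u <> cbot /\ v <> ctop.

Definition lower_neighbor (y x : concept) : bool :=
  clt y x && [forall z : concept, ~~ (clt y z && clt z x)].

Definition sup_irreducible (c : concept) : Prop :=
  #|[set y | lower_neighbor y c]| = 1.
Definition inf_irreducible (c : concept) : Prop :=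
  #|[set y | lower_neighbor c y]| = 1.
Definition doubly_irreducible (c : concept) : Prop :=
  sup_irreducible c /\ inf_irreducible c.

End FCA.

(* Main.v *)
Require Import Defs.
From mathcomp Require Import all_boot.
Set Implicit Arguments. Unset Strict Implicit. Unset Printing Implicit Defensive.

Section Abs.
Variables (T : finType) (le : rel T).
Hypothesis le_refl : forall x, le x x.
Hypothesis le_trans : forall x y z, le x y -> le y z -> le x z.
Hypothesis le_anti : forall x y, le x y -> le y x -> x = y.
Variables (join : T -> T -> T) (bot : T).
Hypothesis joinl : forall x y, le x (join x y).
Hypothesis joinr : forall x y, le y (join x y).
Hypothesis join_lub : forall x y z, le x z -> le y z -> le (join x y) z.
Hypothesis bot_le : forall x, le bot x.

Definition alt x y := (x != y) && le x y.
Definition aln y x := alt y x && [forall z, ~~ (alt y z && alt z x)].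

Lemma key x s : alt x s -> exists2 c, aln c s & le x c.
Proof.
move=> hxs.
have Px : le x x && alt x s by rewrite le_refl hxs.
case: (@arg_maxnP T x (fun z => le x z && alt z s) (fun c => #|[set w | le w c]|) Px).
move=> c /andP[hxc hcs] hmax; exists c => //.
rewrite /aln hcs /=; apply/forallP => z; apply/negP => /andP[hcz hzs].
have := hmax z; rewrite (le_trans hxc (proj2 (andP hcz))) hzs => /(_ isT).
apply/negP; rewrite -ltnNge; apply: proper_card; rewrite properE; apply/andP; split.
  apply/subsetP => w; rewrite !inE => hw; exact: le_trans hw (proj2 (andP hcz)).
apply/subsetP => /(_ z); rewrite !inE le_refl => /(_ isT) hzc.
by move/andP: hcz => [/eqP hne hle]; apply: hne; apply: le_anti.
Qed.

Lemma abs_main s :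
  (s <> bot /\ forall x y, le x s -> le y s -> le s (join x y) -> le s x \/ le s y)
  <-> #|[set y | aln y s]| = 1.
Proof.
split.
- move=> [hsb hp].
  have hbs : alt bot s.
    by rewrite /alt bot_le andbT; apply/eqP => e; apply: hsb.
  have [c hc _] := key hbs.
  apply/eqP/cards1P; exists c; apply/setP => d; rewrite !inE.
  apply/idP/idP; last by move/eqP->.
  move=> hd; case: (eqVneq d c) => // hne; exfalso.
  move: (hc) (hd) => /andP[/andP[hcs1 hcs2] /forallP hcf] /andP[/andP[hds1 hds2] /forallP hdf].
  have hj : join c d = s.
    case: (eqVneq (join c d) s) => // hjs.
    have hjs' : alt (join c d) s by rewrite /alt hjs join_lub.
    have ec : c = join c d.
      case: (eqVneq c (join c d)) => // h; have := hcf (join c d); by rewrite /alt in hjs' *; rewrite h joinl hjs'.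
    have ed : d = join c d.
      case: (eqVneq d (join c d)) => // h; have := hdf (join c d); by rewrite /alt in hjs' *; rewrite h joinr hjs'.
    by rewrite ec -ed eqxx in hne.
  have hsj : le s (join c d) by rewrite hj le_refl.
  have [h|h] := hp c d hcs2 hds2 hsj.
    by move/negP: hcs1; apply; apply/eqP; apply: le_anti.
  by move/negP: hds1; apply; apply/eqP; apply: le_anti.
- move/eqP/cards1P => [c hc].
  have hcln : aln c s by have := set11 c; rewrite -hc inE.
  have uniq d : aln d s -> d = c by move=> h; apply/set1P; rewrite -hc inE.
  move: (hcln) => /andP[/andP[hcs1 hcs2] _].
  split.
    move=> e; subst s; move/negP: hcs1; apply; apply/eqP; apply: le_anti => //.
  move=> x y hx hy hj.
  case hsx: (le s x); first by left.
  case hsy: (le s y); first by right.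
  exfalso.
  have ax : alt x s by rewrite /alt hx andbT; apply/eqP => e; rewrite e le_refl in hsx.
  have ay : alt y s by rewrite /alt hy andbT; apply/eqP => e; rewrite e le_refl in hsy.
  have [c1 h1 hx1] := key ax; have [c2 h2 hy2] := key ay.
  rewrite (uniq _ h1) in hx1; rewrite (uniq _ h2) in hy2.
  have hsc : le s c := le_trans hj (join_lub hx1 hy2).
  by move/negP: hcs1; apply; apply/eqP; apply: le_anti.
Qed.
End Abs.

Section Conc.
Variables (G M : finType) (I : G -> M -> bool).
Implicit Types x y z : concept I.

Lemma intentE (x : concept I) : intent x = ext_der I (extent x).
Proof. by case: x => [[A B] H]; case/andP: (H) => /eqP e _; rewrite /intent /extent /= e. Qed.
Lemma extentE (x : concept I) : extent x = int_der I (intent x).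
Proof. by case: x => [[A B] H]; case/andP: (H) => _ /eqP e; rewrite /intent /extent /= e. Qed.

Lemma ext_anti (A A' : {set G}) : A \subset A' -> ext_der I A' \subset ext_der I A.
Proof. by move=> h; rewrite -galois; apply: subset_trans h _; rewrite galois. Qed.
Lemma int_anti (B B' : {set M}) : B \subset B' -> int_der I B' \subset int_der I B.
Proof. by move=> h; rewrite galois; apply: subset_trans h _; rewrite -galois. Qed.

Lemma cle_refl x : cle x x. Proof. exact: subxx. Qed.
Lemma cle_trans x y z : cle x y -> cle y z -> cle x z. Proof. exact: subset_trans. Qed.
Lemma cle_anti (x y : concept I) : cle x y -> cle y x -> x = y.
Proof.
move=> h1 h2; have e : extent x = extent y by apply/eqP; rewrite eqEsubset; apply/andP.
apply: val_inj; rewrite [val x]surjective_pairing [val y]surjective_pairing.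
by rewrite -/(extent x) -/(intent x) -/(extent y) -/(intent y) !intentE e.
Qed.

Lemma cjoinl x y : cle x (cjoin x y).
Proof. by rewrite /cle /cjoin /extent /= galois -intentE subsetIl. Qed.
Lemma cjoinr x y : cle y (cjoin x y).
Proof. by rewrite /cle /cjoin /extent /= galois -intentE subsetIr. Qed.
Lemma cjoin_lub x y z : cle x z -> cle y z -> cle (cjoin x y) z.
Proof.
rewrite /cle /cjoin /extent /= -!/(extent _) => hx hy.
rewrite [extent z]extentE; apply: int_anti; rewrite subsetI.
by rewrite !intentE !ext_anti.
Qed.
Lemma cbot_le x : cle (cbot I) x.
Proof. by rewrite /cle /cbot /extent /= -/(extent x) extentE int_anti // subsetT. Qed.

Lemma cmeetl x y : cle (cmeet x y) x.
Proof.
rewrite /cle /cmeet /extent /= -!/(extent _).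
apply: subset_trans (_ : _ \subset int_der I (intent x)) _; last by rewrite -extentE.
by apply: int_anti; rewrite intentE ext_anti // subsetIl.
Qed.
Lemma cmeetr x y : cle (cmeet x y) y.
Proof.
rewrite /cle /cmeet /extent /= -!/(extent _).
apply: subset_trans (_ : _ \subset int_der I (intent y)) _; last by rewrite -extentE.
by apply: int_anti; rewrite intentE ext_anti // subsetIr.
Qed.
Lemma cmeet_glb x y z : cle z x -> cle z y -> cle z (cmeet x y).
Proof.
rewrite /cle /cmeet /extent /= -!/(extent _) => hx hy.
apply: subset_trans (_ : extent x :&: extent y \subset _); first by rewrite subsetI hx.
by rewrite galois.
Qed.
Lemma le_ctop x : cle x (ctop I).
Proof. by rewrite /cle /ctop /extent /= galois ext_anti // subsetT. Qed.

End Conc.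

Lemma set_ext (T : finType) (P Q : pred T) : P =1 Q -> [set y | P y] = [set y | Q y].
Proof. by move=> h; apply/setP => y; rewrite !inE h. Qed.

Lemma ln_dual (G M : finType) (I : G -> M -> bool) (s y : concept I) :
  aln (fun a b => @cle G M I b a) y s = lower_neighbor s y.
Proof.
rewrite /aln /alt /lower_neighbor /clt eq_sym.
have e z : [&& (y != z) && cle z y, z != s & cle s z] = [&& (s != z) && cle s z, z != y & cle z y].
  by rewrite (eq_sym y z) (eq_sym z s); case: (z != y); case: (s != z); case: (cle z y); case: (cle s z).
congr (_ && _); apply/forallP/forallP => h z.
  rewrite -e; exact: h.
rewrite e; exact: h.
Qed.

Theorem proposition2 (G M : finType) (I : G -> M -> bool) (s : concept I) :
  dismantling s s <-> doubly_irreducible s.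
Proof.
have A := @abs_main _ (@cle G M I) (@cle_refl _ _ I) (@cle_trans _ _ I) (@cle_anti _ _ I)
  (@cjoin _ _ I) (cbot I) (@cjoinl _ _ I) (@cjoinr _ _ I) (@cjoin_lub _ _ I) (@cbot_le _ _ I) s.
have B := @abs_main _ (fun x y => @cle G M I y x) (@cle_refl _ _ I)
  (fun x y z h1 h2 => @cle_trans _ _ I z y x h2 h1) (fun x y h1 h2 => @cle_anti _ _ I x y h2 h1)
  (@cmeet _ _ I) (ctop I) (@cmeetl _ _ I) (@cmeetr _ _ I)
  (fun x y z h1 h2 => @cmeet_glb _ _ I x y z h1 h2) (@le_ctop _ _ I) s.
have E1 : [set y | aln (@cle G M I) y s] = [set y | lower_neighbor y s].
  by apply: set_ext.
have E2 : [set y | aln (fun x y => @cle G M I y x) y s] = [set y | lower_neighbor s y].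
  apply: set_ext => y; exact: ln_dual.
rewrite E1 in A; rewrite E2 in B.
rewrite /doubly_irreducible /sup_irreducible /inf_irreducible.
rewrite /dismantling /quasi_dismantling /sup_prime_below /inf_prime_above.
split.
  move=> [[_ [h1 h2]] [h3 h4]]; split; [apply/A | apply/B]; split => //.
move=> [/A [h1 h2] /B [h3 h4]]; split; [split; [exact: cle_refl| split] | split] => //.
Qed.
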